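(* Let $G$ be a finite induced regular group and let $x\in G$ be such that $C_G(x)$ is a maximal centralizer in $G$. If there exists an element $y\in C_G(x)\setminus\beta_G(x)$ such that the order of $yZ(G)$ in $G/Z(G)$ is a prime $p\neq 2$, then $(\beta_G(x)\cup Z(G))/Z(G)$ is an elementary $p$-group.
   Context: For a finite group $G$, $C_G(x)$ denotes the centralizer of $x\in G$ and $Z(G)$ the center; $\beta_G(x)=\{y\in G\mid C_G(y)=C_G(x)\}$. The non-centralizer graph $\Upsilon_G$ is the simple graph with vertex set $G$ in which two distinct vertices $x,y$ are adjacent iff $C_G(x)\neq C_G(y)$; the induced non-centralizer graph $\Upsilon_{G\setminus Z(G)}$ is its induced subgraph on $G\setminus Z(G)$. $G$ is called induced regular if $\Upsilon_{G\setminus Z(G)}$ is a regular graph. A centralizer $C_G(x)$ is called maximal if it is not contained in any other proper centralizer of $G$. A group is called an elementary $p$-group if every non-identity element has order exactly $p$ (it need not be abelian). *)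

(* Defs.v *)
From mathcomp Require Import all_boot all_fingroup all_solvable.
Set Implicit Arguments.
Unset Strict Implicit.
Unset Printing Implicit Defensive.
Import GroupScope.
Local Open Scope group_scope.

Definition beta (gT : finGroupType) (G : {group gT}) (x : gT) : {set gT} :=
  [set y in G | 'C_G[y] == 'C_G[x]].

(* degree of x in the induced non-centralizer graph on G \ Z(G):
   distinct vertices u, v adjacent iff C_G(u) <> C_G(v). *)
Definition ind_deg (gT : finGroupType) (G : {group gT}) (x : gT) : nat :=
  #|[set y in G :\: 'Z(G) | (y != x) && ('C_G[y] != 'C_G[x])]|.

Definition induced_regular (gT : finGroupType) (G : {group gT}) : Prop :=
  forall x y, x \in G :\: 'Z(G) -> y \in G :\: 'Z(G) ->
    ind_deg G x = ind_deg G y.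

Definition max_centralizer (gT : finGroupType) (G : {group gT}) (x : gT) : Prop :=
  'C_G[x] \proper G /\
  forall y, y \in G -> 'C_G[y] \proper G -> 'C_G[x] \subset 'C_G[y] ->
    'C_G[y] = 'C_G[x].

Definition elementary_pgroup (gT : finGroupType) (p : nat) (H : {set gT}) : Prop :=
  group_set H /\ forall h, h \in H -> h != 1 -> #[h] = p.

(* Main.v *)
Require Import Defs.
From mathcomp Require Import all_boot all_fingroup all_solvable.
From mathcomp Require Import zify.
Import GroupScope.
Local Open Scope group_scope.

Set Implicit Arguments.
Unset Strict Implicit.
Section Aux.
Variables (gT : finGroupType) (G : {group gT}).

Lemma inCG x g : (g \in 'C_G[x]) = (g \in G) && (g \in 'C[x]).
Proof. by rewrite inE. Qed.

Lemma notZ_proper w : w \in G -> w \notin 'Z(G) -> 'C_G[w] \proper G.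
Proof.
move=> wG wZ; rewrite properEneq subsetIl andbT; apply/negP => /eqP E.
case/negP: wZ; apply/centerP; split=> // g gG.
have : g \in 'C_G[w] by rewrite E.
by rewrite inCG => /andP [_ /cent1P c].
Qed.

Lemma Z_cent w g : w \in 'Z(G) -> g \in G -> commute g w.
Proof. by move=> /centerP [_ c] gG; apply: commute_sym; apply: c. Qed.

Lemma beta_sub w : w \in G -> w \notin 'Z(G) -> beta G w \subset G :\: 'Z(G).
Proof.
move=> wG wZ; apply/subsetP => v; rewrite inE => /andP [vG /eqP E].
rewrite inE vG andbT; apply/negP => vZ.
have := notZ_proper wG wZ; rewrite -E properEneq => /andP [/eqP []].
apply/eqP; rewrite eqEsubset subsetIl /=; apply/subsetP => g gG.
by rewrite inCG gG; apply/cent1P; apply: Z_cent.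
Qed.

Lemma ind_deg_beta w : w \in G -> w \notin 'Z(G) ->
  ind_deg G w = #|G :\: 'Z(G)| - #|beta G w|.
Proof.
move=> wG wZ; rewrite /ind_deg.
have -> : [set v in G :\: 'Z(G) | (v != w) && ('C_G[v] != 'C_G[w])]
          = (G :\: 'Z(G)) :\: beta G w.
  apply/setP => v; rewrite !inE.
  case: (v =P w) => [->|_] /=; first by rewrite eqxx wG !andbF.
  by case: (v \in G); case: (v \in 'C(G)); case: (_ == _).
by rewrite cardsD (setIidPr (beta_sub wG wZ)).
Qed.

End Aux.

Section Main.
Variables (gT : finGroupType) (G : {group gT}) (x : gT).
Hypotheses (xG : x \in G) (maxC : max_centralizer G x).

Definition AA := beta G x :|: 'Z(G).

Lemma memA a : (a \in AA) = (a \in G) && ('C_G[x] \subset 'C_G[a]).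
Proof.
rewrite !inE; case aG: (a \in G) => //=.
case aZ: (a \in 'C(G)).
  rewrite orbT; symmetry; apply/subsetP => g; rewrite !inCG => /andP [gG _].
  by rewrite gG; apply/cent1P; apply: (Z_cent (G:=G)) => //; rewrite inE aG aZ.
rewrite orbF; apply/idP/idP => [/eqP -> //|sub].
apply/eqP; apply: (proj2 maxC) => //; apply: notZ_proper => //; by rewrite inE aG aZ.
Qed.

Lemma A_comm a g : a \in AA -> g \in 'C_G[x] -> commute g a.
Proof.
rewrite memA => /andP [_ /subsetP s] /s; rewrite inCG => /andP [_ /cent1P]//.
Qed.

Lemma A_G a : a \in AA -> a \in G.
Proof. by rewrite memA => /andP []. Qed.

Lemma groupA : group_set AA.
Proof.
apply/group_setP; split.
  rewrite memA group1; apply/subsetP => g; rewrite !inCG => /andP [-> _].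
  by apply/cent1P; apply: commute1.
move=> a b aA bA; rewrite memA groupM ?A_G //; apply/subsetP => g gC.
rewrite inCG (subsetP (subsetIl _ _) _ gC) /=; apply/cent1P.
by apply: commuteM; apply: A_comm.
Qed.

Definition AG := Group groupA.

Lemma A_C a : a \in AA -> a \in 'C_G[x].
Proof.
move=> aA; rewrite inCG A_G //; apply/cent1P; apply: commute_sym.
by apply: A_comm => //; rewrite inCG xG; apply/cent1P.
Qed.

Lemma keyC p u b g : u \in 'C_G[x] -> u ^+ p \in 'Z(G) -> b \in AA ->
  b ^+ p \notin 'Z(G) ->
  (g \in 'C_G[u * b]) = (g \in 'C_G[x]) && (g \in 'C[u]).
Proof.
move=> uC upZ bA bpZ.
have uG : u \in G := subsetP (subsetIl _ _) _ uC.
have cub : commute u b by apply: A_comm.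
apply/idP/idP.
  move=> /setIP [gG /cent1P c].
  have c1 : commute g ((u * b) ^+ p) by apply: commuteX.
  rewrite expgMn // in c1.
  have c2 : commute g (b ^+ p).
    have -> : b ^+ p = (u ^+ p)^-1 * (u ^+ p * b ^+ p) by rewrite mulKg.
    apply: commuteM => //; apply: commuteV; exact: (Z_cent upZ gG).
  have bpA : b ^+ p \in AA := @groupX _ AG _ p bA.
  have gx : g \in 'C_G[x].
    move: bpA; rewrite inE (negbTE bpZ) orbF inE => /andP [_ /eqP <-].
    by rewrite inCG gG; apply/cent1P.
  rewrite gx /=; apply/cent1P.
  have -> : u = (u * b) * b^-1 by rewrite mulgK.
  apply: commuteM => //; apply: commuteV; exact: A_comm.
case/andP => gx /cent1P gu; rewrite inCG.
rewrite (subsetP (subsetIl _ _) _ gx) /=; apply/cent1P.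
by apply: commuteM => //; apply: A_comm.
Qed.

End Main.

Unset Implicit Arguments.
Set Strict Implicit.
Theorem proposition3p4 (gT : finGroupType) (G : {group gT}) (x : gT) (p : nat) :
  induced_regular G -> x \in G -> max_centralizer G x ->
  prime p -> p != 2 ->
  (exists2 y, y \in 'C_G[x] :\: beta G x & #[coset 'Z(G) y] = p) ->
  elementary_pgroup p (coset 'Z(G) @: (beta G x :|: 'Z(G))).
Proof.
move=> reg xG maxC pr p2 [y].
rewrite inE => /andP [yb yC] oy.
pose H := AG maxC.
have memH : forall a, (a \in H) = (a \in G) && ('C_G[x] \subset 'C_G[a]) := memA maxC.
have HC : forall a, a \in H -> a \in 'C_G[x] := A_C xG maxC.
have HG : forall a, a \in H -> a \in G := A_G maxC.
have Hcomm : forall a g, a \in H -> g \in 'C_G[x] -> commute g a := A_comm maxC.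
have yG : y \in G by move: yC; rewrite inE => /andP [].
have GN : G \subset 'N('Z(G)) by apply: normal_norm; apply: center_normal.
have yN : y \in 'N('Z(G)) by apply: (subsetP GN).
have ypZ : y ^+ p \in 'Z(G).
  have cy : coset 'Z(G) (y ^+ p) = 1.
    have -> : coset 'Z(G) (y ^+ p) = (coset 'Z(G) y) ^+ p.
      exact: (morphX (coset_morphism 'Z(G)) p yN).
    by rewrite -oy expg_order.
  exact: (coset_idr (groupX p yN) cy).
have yZ : y \notin 'Z(G).
  apply/negP => /coset_id; move: oy => /[swap] ->; rewrite order1 => p1.
  by move: pr; rewrite -p1.
have yA : y \notin H by rewrite inE negb_or yb yZ.
have ZH : 'Z(G) \subset H by apply/subsetP => z zZ; rewrite inE zZ orbT.
have podd : odd p by case: (even_prime pr) => // E; rewrite E in p2.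
have y2A : y * y \notin H.
  apply/negP => y2.
  have E : (y * y) ^+ (p.+1./2) * (y ^+ p)^-1 = y.
    have -> : y * y = y ^+ 2 by rewrite expgS expg1.
    rewrite -expgM.
    have -> : (2 * (p.+1)./2 = 1 + p)%N.
      have h := odd_double_half p.+1; rewrite oddS podd /= add0n in h.
      by rewrite mul2n h add1n.
    by rewrite expgD mulgK expg1.
  have : y \in H.
    rewrite -E; apply: groupM; [exact: groupX | rewrite groupV; exact: (subsetP ZH)].
  by rewrite (negbTE yA).
have xZ : x \notin 'Z(G).
  apply/negP => xZ; have := proj1 maxC; rewrite properEneq => /andP [/eqP []].
  apply/eqP; rewrite eqEsubset subsetIl; apply/subsetP => g gG.
  by rewrite inCG gG; apply/cent1P; exact: (Z_cent xZ gG).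
have Om : forall a, a \in H -> a ^+ p \in 'Z(G).
  move=> a aA; apply/negPn/negP => apZ.
  pose f c := if c ^+ p \in 'Z(G) then y^-1 * (a * c) else y * c.
  have yiC : y^-1 \in 'C_G[x] by rewrite groupV.
  have yipZ : y^-1 ^+ p \in 'Z(G) by rewrite expgVn groupV.
  have Cya : forall g, (g \in 'C_G[y * a]) = (g \in 'C_G[x]) && (g \in 'C[y]).
    by move=> g; exact: (keyC maxC g yC ypZ aA apZ).
  have fb : forall c, c \in H -> f c \in beta G (y * a).
    move=> c cA; rewrite /f inE; case: ifP => cpZ.
      have acA : a * c \in H by rewrite groupM.
      have acpZ : (a * c) ^+ p \notin 'Z(G).
        rewrite expgMn; last by apply: Hcomm => //; apply: HC.
        by rewrite groupMr.
      rewrite groupM ?groupV ?yG ?(HG _ acA) //=; apply/eqP; apply/setP => g.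
      rewrite Cya (keyC maxC g yiC yipZ acA acpZ); congr (_ && _); apply/cent1P/cent1P.
        by move/commuteV; rewrite invgK.
      exact: commuteV.
    rewrite groupM ?yG ?(HG _ cA) //=; apply/eqP; apply/setP => g.
    by rewrite Cya (keyC maxC g yC ypZ cA (negbT cpZ)).
  have finj : {in H &, injective f}.
    have Hf : forall c d, c \in H -> d \in H -> y^-1 * (a * c) = y * d -> False.
      move=> c d cA dA E.
      have : y * y \in H.
        have -> : y * y = a * c * d^-1.
          have -> : a * c = y * y * d by rewrite -mulgA -E mulKVg.
          by rewrite mulgK.
        by rewrite groupM ?groupV // groupM.
      by rewrite (negbTE y2A).
    move=> c d cA dA; rewrite /f.
    case: ifP => cp; case: ifP => dp.
    - by move/mulgI/mulgI.
    - by move/(Hf _ _ cA dA).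
    - by move/esym/(Hf _ _ dA cA).
    - by move/mulgI.
  have yaG : y * a \in G by rewrite groupM ?yG ?(HG _ aA).
  have yaZ : y * a \notin 'Z(G).
    apply/negP => yaZ; have := proj1 maxC; rewrite properEneq => /andP [/eqP []].
    apply/eqP; rewrite eqEsubset subsetIl; apply/subsetP => g gG.
    have : g \in 'C_G[y * a].
      by rewrite inCG gG; apply/cent1P; exact: (Z_cent yaZ gG).
    by rewrite Cya => /andP [].
  have e2 : ind_deg G x = ind_deg G (y * a).
    by apply: (reg x (y * a)); rewrite in_setD ?xZ ?xG ?yaZ ?yaG.
  rewrite (ind_deg_beta xG xZ) (ind_deg_beta yaG yaZ) in e2.
  have s1 := subset_leq_card (beta_sub xG xZ).
  have s2 := subset_leq_card (beta_sub yaG yaZ).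
  have eb : #|beta G x| = #|beta G (y * a)|.
    by rewrite -(subKn s1) e2 subKn.
  have l1 : #|H| <= #|beta G (y * a)|.
    rewrite -(card_in_imset finj); apply: subset_leq_card.
    by apply/subsetP => w /imsetP [c cA ->]; apply: fb.
  have l2 : #|beta G x| < #|H|.
    apply: proper_card; rewrite properE; apply/andP; split.
      by apply/subsetP => w wb; rewrite inE wb.
    apply/subsetPn; exists 1; first by rewrite group1.
    rewrite inE group1 /=; apply/negP => /eqP E.
    have := proj1 maxC; rewrite properEneq -E => /andP [/eqP []].
    apply/eqP; rewrite eqEsubset subsetIl; apply/subsetP => g gG.
    by rewrite inCG gG; apply/cent1P; apply: commute1.
  by move: l2; rewrite eb ltnNge l1.
split.
  have -> : coset 'Z(G) @: (beta G x :|: 'Z(G)) = coset 'Z(G) @* H.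
    rewrite morphimEsub //; apply: subset_trans GN; apply/subsetP => w; exact: HG.
  exact: groupP.
move=> h /imsetP [a aA ->] h1.
apply/prime_nt_dvdP => //; first by rewrite order_eq1.
have aN : a \in 'N('Z(G)) by apply: (subsetP GN); apply: HG.
have E : coset 'Z(G) a ^+ p = coset 'Z(G) (a ^+ p).
  exact: esym (morphX (coset_morphism 'Z(G)) p aN).
by rewrite order_dvdn E coset_id ?Om.
Qed.
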